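(* Each of the following graphs is not strongly EFX-orientable: (i) the union of two odd cycles that share exactly one edge (and no other vertices); (ii) the union of two odd cycles that share exactly one vertex; (iii) the union of two vertex-disjoint odd cycles $C$ and $C'$ together with a path of length at least $1$ from a vertex of $C$ to a vertex of $C'$ whose internal vertices lie on neither cycle.
   Context: All graphs are finite and simple. For a graph $G=(V,E)$ and $v\in V$, $E(v)$ is the set of edges incident to $v$. A graphical instance on $G$ assigns to each vertex $v$ a valuation $f_v:2^E\to\mathbb{R}_{\ge 0}$ that is monotone ($A\subseteq B\Rightarrow f_v(A)\le f_v(B)$) and satisfies $f_v(X)=f_v(X\cap E(v))$ for all $X\subseteq E$. An orientation of $G$ chooses for each edge one of its endpoints as its head; vertex $v$ receives the bundle $X_v$ of edges whose head is $v$. The orientation is EFX if for all $u,v\in V$ and every $g\in X_v$, $f_u(X_u)\ge f_u(X_v\setminus\{g\})$. A graph $G$ is strongly EFX-orientable if for every graphical instance on $G$ there exists an EFX orientation. *)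

(* Defs.v *)
From HB Require Import structures.
From mathcomp Require Import all_boot all_order all_algebra.
From mathcomp Require Import reals.
Set Implicit Arguments. Unset Strict Implicit. Unset Printing Implicit Defensive.
Import Order.TTheory GRing.Theory Num.Theory.
Local Open Scope ring_scope.

Section Graphs.
Variable T : finType.

(* A finite simple graph is given by a symmetric irreflexive relation e on T;
   its edges are the 2-element sets {x, y} with e x y. *)
Definition edges (e : rel T) : {set {set T}} :=
  [set [set q.1; q.2] | q : T * T & e q.1 q.2].

Definition inc_edges (e : rel T) (v : T) : {set {set T}} :=
  [set a in edges e | v \in a].

Definition is_cycle (e : rel T) (c : seq T) : bool :=
  [&& cycle e c, uniq c & 3 <= size c]%N.

Definition cycle_edges (c : seq T) : {set {set T}} :=
  [set [set q.1; q.2] | q in zip c (rot 1 c)].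

Definition cycle_verts (c : seq T) : {set T} := [set x in c].

Definition path_edges (x : T) (p : seq T) : {set {set T}} :=
  [set [set q.1; q.2] | q in zip (x :: p) p].

Definition two_odd_cycles_share_edge (e : rel T) : Prop :=
  exists c1 c2 : seq T, exists a : {set T},
    [/\ is_cycle e c1, is_cycle e c2, odd (size c1) & odd (size c2)] /\
    [/\         cycle_edges c1 :&: cycle_edges c2 = [set a],
        cycle_verts c1 :&: cycle_verts c2 = a,
        edges e = cycle_edges c1 :|: cycle_edges c2 &
        forall v : T, v \in cycle_verts c1 :|: cycle_verts c2].

Definition two_odd_cycles_share_vertex (e : rel T) : Prop :=
  exists c1 c2 : seq T, exists w : T,
    [/\ is_cycle e c1, is_cycle e c2, odd (size c1) & odd (size c2)] /\
    [/\         cycle_verts c1 :&: cycle_verts c2 = [set w],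
        edges e = cycle_edges c1 :|: cycle_edges c2 &
        forall v : T, v \in cycle_verts c1 :|: cycle_verts c2].

(* (iii) two vertex-disjoint odd cycles joined by a path x :: p of length
   size p >= 1 from x on c1 to last x p on c2, internal vertices off both. *)
Definition two_odd_cycles_joined_by_path (e : rel T) : Prop :=
  exists c1 c2 : seq T, exists x : T, exists p : seq T,
    [/\ is_cycle e c1, is_cycle e c2, odd (size c1) & odd (size c2)] /\
    [/\         cycle_verts c1 :&: cycle_verts c2 = set0,
        [/\ path e x p, uniq (x :: p) & (1 <= size p)%N] /\
        [/\ x \in c1, last x p \in c2 &
            all (fun v => (v \notin c1) && (v \notin c2)) (behead (belast x p))],
        edges e = cycle_edges c1 :|: cycle_edges c2 :|: path_edges x p &
        forall v : T, v \in cycle_verts c1 :|: cycle_verts c2 :|: [set y in x :: p]].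

Variable R : realType.

(* Valuations are functions on {set {set T}} but all
   requirements (and their use) concern only subsets of edges e. *)
Definition graphical_instance (e : rel T) (f : T -> {set {set T}} -> R) : Prop :=
  forall v : T,
    [/\ forall A : {set {set T}}, A \subset edges e -> 0 <= f v A,
        forall A B : {set {set T}}, A \subset B -> B \subset edges e ->
          f v A <= f v B &
        forall X : {set {set T}}, X \subset edges e ->
          f v X = f v (X :&: inc_edges e v)].

Definition orientation (e : rel T) (o : {set T} -> T) : Prop :=
  forall a, a \in edges e -> o a \in a.

Definition bundle (e : rel T) (o : {set T} -> T) (v : T) : {set {set T}} :=
  [set a in edges e | o a == v].

Definition EFX_orientation (e : rel T) (f : T -> {set {set T}} -> R)
    (o : {set T} -> T) : Prop :=
  orientation e o /\
  forall u v : T, forall g, g \in bundle e o v ->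
    f u (bundle e o v :\ g) <= f u (bundle e o u).

Definition strongly_EFX_orientable (e : rel T) : Prop :=
  forall f : T -> {set {set T}} -> R, graphical_instance e f ->
    exists o : {set T} -> T, EFX_orientation e f o.

End Graphs.

(* Main.v *)
Require Import Defs.
From HB Require Import structures.
From mathcomp Require Import all_boot all_order all_algebra.
From mathcomp Require Import reals.
From mathcomp Require Import zify.

Module Aux.
Set Implicit Arguments. Unset Strict Implicit. Unset Printing Implicit Defensive.
Import Order.TTheory GRing.Theory Num.Theory.

Section Gen.
Variable T : finType.
Variable e : rel T.
Hypothesis esym : symmetric e.
Hypothesis eirr : irreflexive e.
Variable R : realType.

Definition wt (top : T -> {set T}) (sec : T -> {set {set T}}) (v : T) (g : {set T}) : nat :=
  if g == top v then 2 else if g \in sec v then 1 else 0.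

Definition fw top sec (v : T) (S : {set {set T}}) : R :=
  ((\max_(g in S :&: inc_edges e v) wt top sec v g)%N)%:R.

Lemma fw_gi top sec : graphical_instance e (fw top sec).
Proof.
move=> v; split.
- by move=> A _; apply: ler0n.
- move=> A B AB _; rewrite /fw ler_nat; apply/bigmax_leqP => g gA.
  move: gA; rewrite !inE => /andP[gA gi].
  by apply: leq_bigmax_cond; rewrite !inE (subsetP AB _ gA).
- by move=> X _; rewrite /fw -setIA setIid.
Qed.

Lemma edgesP a b : e a b -> [set a; b] \in edges e.
Proof. by move=> h; rewrite /edges; apply/imsetP; exists (pair a b); rewrite ?inE. Qed.


Lemma nthU (x0 : T) (s : seq T) i j : uniq s -> i < size s -> j < size s ->
  nth x0 s i = nth x0 s j -> i = j.
Proof. by move=> U iS jS /eqP; rewrite nth_uniq // => /eqP. Qed.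

Lemma zip_rot1 (c : seq T) : uniq c -> zip c (rot 1 c) = [seq (x, next c x) | x <- c].
Proof.
case: c => [|y p] // U; rewrite rot1_cons.
apply: (@eq_from_nth _ (y,y)); first by rewrite size_zip size_map size_rcons /= minnn.
move=> i; rewrite size_zip size_rcons /= minnn => ip.
rewrite nth_zip ?size_rcons //.
have -> : (y, next_at y y y p) :: [seq (x, next_at x y y p) | x <- p] =
  map (fun x => (x, next (y :: p) x)) (y :: p) by [].
rewrite (nth_map y) //.
congr pair; rewrite next_nth mem_nth // index_uniq //.
by rewrite nth_rcons_default.
Qed.

Lemma CE_next (c : seq T) : uniq c -> cycle_edges c = [set [set x; next c x] | x : T in c].
Proof.
move=> U; rewrite /cycle_edges zip_rot1 //; apply/setP => g.
apply/imsetP/imsetP => [[q /mapP[x xc ->] ->]|[x xc ->]].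
  by exists x.
by exists (x, next c x) => //; apply/mapP; exists x.
Qed.

Lemma CE_sub (c : seq T) (g : {set T}) (z : T) : uniq c -> g \in cycle_edges c -> z \in g -> z \in c.
Proof.
move=> U; rewrite CE_next // => /imsetP[x xc ->]; rewrite !inE => /orP[]/eqP->//.
by rewrite mem_next.
Qed.

Lemma CE_edges (c : seq T) (g : {set T}) : is_cycle e c -> g \in cycle_edges c -> g \in edges e.
Proof.
case/and3P=> cy U _; rewrite CE_next // => /imsetP[x xc ->].
by apply: edgesP; apply: next_cycle.
Qed.

Lemma cyc_deg2 (c : seq T) (v : T) (g1 g2 g3 : {set T}) : uniq c -> g1 \in cycle_edges c -> g2 \in cycle_edges c ->
  g3 \in cycle_edges c -> v \in g1 -> v \in g2 -> v \in g3 ->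
  [|| g1 == g2, g1 == g3 | g2 == g3].
Proof.
move=> U.
have K : forall g, g \in cycle_edges c -> v \in g -> (g == [set v; next c v]) || (g == [set prev c v; v]).
  move=> g; rewrite CE_next // => /imsetP[x xc ->]; rewrite !inE => /orP[]/eqP E.
    by rewrite E eqxx.
  by rewrite E prev_next // eqxx orbT.
move=> /K h1 /K h2 /K h3 /h1 {}h1 /h2 {}h2 /h3 {}h3.
by case/orP: h1 => /eqP->; case/orP: h2 => /eqP->; case/orP: h3 => /eqP->; rewrite ?eqxx ?orbT.
Qed.

Lemma rot_at (c : seq T) (w : T) : w \in c -> is_cycle e c -> exists r,
  [/\ is_cycle e (w :: r), cycle_edges (w :: r) = cycle_edges c,
      (forall z, (z \in w :: r) = (z \in c)) & size (w :: r) = size c].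
Proof.
move=> wc cy; have := rot_index wc; set r := (_ ++ _) => E; exists r; rewrite -E.
move: cy => /and3P[cy U S].
split.
- by rewrite /is_cycle rot_cycle rot_uniq size_rot cy U S.
- rewrite !CE_next ?rot_uniq //; apply/setP => g.
  by apply/imsetP/imsetP => [][x xc ->]; exists x; rewrite ?mem_rot ?next_rot // in xc *.
- by move=> z; rewrite mem_rot.
- by rewrite size_rot.
Qed.

Lemma CE_at (w : T) (r : seq T) i : uniq (w :: r) -> i < (size r).+1 ->
  [set nth w (w :: r) i; nth w (w :: r) i.+1] \in cycle_edges (w :: r).
Proof.
move=> U iL; rewrite CE_next //; apply/imsetP; exists (nth w (w :: r) i).
  by rewrite mem_nth.
by rewrite next_nth mem_nth // index_uniq.
Qed.

Definition pm (b : bool) (s : seq T) (v : T) : T :=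
  nth v s (if odd (index v s) (+) b then (index v s).-1 else (index v s).+1).

Lemma pmP b (s : seq T) (x0 : T) j : uniq s -> j < size s ->
  (if odd j (+) b then 0 < j else j.+1 < size s) ->
  let j' := (if odd j (+) b then j.-1 else j.+1) in
  [/\ pm b s (nth x0 s j) = nth x0 s j', j' < size s,
      pm b s (nth x0 s j') = nth x0 s j & (j' = j.+1 \/ j = j'.+1)].
Proof.
move=> U js H j'.
have j's : j' < size s by rewrite /j'; case: ifP H => _ //; lia.
split => //.
- by rewrite /pm index_uniq // (set_nth_default x0).
- rewrite /pm index_uniq // /j'.
  case: ifP H j's => h H j's.
    have -> : odd j.-1 (+) b = false.
      by move: h; rewrite -{1}(prednK H) /=; case: (odd j.-1); case: (b).
    by rewrite prednK // (set_nth_default x0).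
  have -> : odd j.+1 (+) b = true by move: h => /=; case: (odd j); case: (b).
  by rewrite /= (set_nth_default x0).
- by rewrite /j'; case: ifP H => _ H; [right; rewrite prednK | left].
Qed.

Lemma even_next n j : ~~ odd n -> j < n -> ~~ odd j -> j.+1 < n.
Proof.
move=> en jn oj; rewrite ltn_neqAle jn andbT; apply/eqP => E.
by move: en; rewrite -E /= oj.
Qed.

Lemma PE_at (x : T) (p : seq T) i : i < size p ->
  [set nth x (x :: p) i; nth x (x :: p) i.+1] \in path_edges x p.
Proof.
move=> ip; apply/imsetP; exists (nth x (x :: p) i, nth x p i) => //.
have -> : (nth x (x :: p) i, nth x p i) = nth (x, x) (zip (x :: p) p) i.
  by rewrite nth_zip_cond size_zip /= (minn_idPr (leqnSn _)) ip.
by apply: mem_nth; rewrite size_zip /= (minn_idPr (leqnSn _)).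
Qed.

Lemma PE_inv (x : T) (p : seq T) g : g \in path_edges x p ->
  exists2 i, i < size p & g = [set nth x (x :: p) i; nth x (x :: p) i.+1].
Proof.
case/imsetP => q qin ->.
set i := index q (zip (x :: p) p).
have iz : i < size (zip (x :: p) p) by rewrite index_mem.
have E : nth (x, x) (zip (x :: p) p) i = q := nth_index _ qin.
exists i; first by move: iz; rewrite size_zip /= (minn_idPr (leqnSn _)).
by rewrite -E nth_zip_cond iz.
Qed.


Lemma adjCE (w : T) (r : seq T) j j' : uniq (w :: r) -> j < size r -> j' < size r ->
  (j' = j.+1 \/ j = j'.+1) -> [set nth w r j; nth w r j'] \in cycle_edges (w :: r).
Proof.
move=> U js j's [->|->].
  exact: (CE_at U (i := j.+1) js).
by rewrite setUC; exact: (CE_at U (i := j'.+1) j's).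
Qed.

Lemma pair_top (w : T) (r : seq T) v : is_cycle e (w :: r) -> ~~ odd (size r) -> v \in r ->
  [/\ [set v; pm false r v] \in cycle_edges (w :: r), pm false r v \in r,
      pm false r v != v & pm false r (pm false r v) = v].
Proof.
move=> cy ev vr; move: (cy) => /and3P[_ U _]; have Ur : uniq r by case/andP: U.
set j := index v r; have js : j < size r by rewrite index_mem.
have vE : nth w r j = v by rewrite nth_index.
have cond : if odd j (+) false then 0 < j else j.+1 < size r.
  rewrite addbF; case: ifP => oj; first by case: (j) oj.
  by apply: even_next => //; rewrite oj.
have [P1 P2 P3 P4] := pmP w Ur js cond.
set j' := (if _ then _ else _) in P1 P2 P3 P4.
have jj : j != j' by case: P4 => ->; [rewrite ltn_eqF | rewrite gtn_eqF].
have pmv : pm false r v = nth w r j' by rewrite -P1 vE.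
split.
- by rewrite pmv -{1}vE; apply: adjCE.
- by rewrite pmv mem_nth.
- by rewrite pmv; apply/eqP => E; move: jj; rewrite -vE in E; rewrite (nthU Ur P2 js E) eqxx.
- by rewrite pmv P3.
Qed.
Section O.
Variables (top : T -> {set T}) (sec : T -> {set {set T}}) (o : {set T} -> T).
Hypothesis hE : EFX_orientation e (fw top sec) o.

Definition holds g v := (g \in edges e) && (o g == v).

Lemma holds_in g v : holds g v -> v \in g.
Proof. by case/andP=> ge /eqP <-; apply: hE.1. Qed.

Lemma holds_o g : g \in edges e -> holds g (o g).
Proof. by move=> h; rewrite /holds h eqxx. Qed.

Lemma viol u v g h : holds g v -> holds h v -> g != h -> u \in g ->
  0 < wt top sec u g ->
  (forall g', holds g' u -> wt top sec u g' < wt top sec u g) -> False.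
Proof.
move=> hg hh ngh ug wpos hlt.
move: (hg) (hh) => /andP[ge /eqP og] /andP[he /eqP oh].
have := hE.2 u v h; rewrite /bundle inE he oh eqxx => /(_ isT).
rewrite /fw ler_nat => H.
have H1 : wt top sec u g <= \max_(g0 in ([set a in edges e | o a == v] :\ h) :&: inc_edges e u) wt top sec u g0.
  by apply: leq_bigmax_cond; rewrite !inE ge ug ngh og eqxx.
have H2 := leq_trans H1 H.
have H3 : \max_(g0 in [set a in edges e | o a == u] :&: inc_edges e u) wt top sec u g0 <= (wt top sec u g).-1.
  apply/bigmax_leqP => g'; rewrite !inE => /andP[/andP[g'e og'] _].
  by rewrite -ltnS prednK //; apply: hlt; rewrite /holds g'e og'.
have := leq_trans H2 H3.
by rewrite leqNgt prednK // leqnn.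
Qed.

Lemma topv u v g h : holds g v -> holds h v -> g != h -> top u = g -> u \in g -> u != v -> False.
Proof.
move=> hg hh ngh tu ug uv; apply: (viol hg hh ngh ug).
  by rewrite /wt tu eqxx.
move=> g' hg'; rewrite /wt tu eqxx.
have -> : (g' == g) = false.
  apply/negbTE; apply: contraNneq uv => E.
  move: hg hg' => /andP[_ /eqP og] /andP[_ /eqP og'].
  by rewrite -og' E og.
by case: ifP.
Qed.

Lemma secv u v g h : holds g v -> holds h v -> g != h -> g \in sec u -> u \in g ->
  (forall g', holds g' u -> (g' != top u) && (g' \notin sec u)) -> False.
Proof.
move=> hg hh ngh gs ug H; apply: (viol hg hh ngh ug).
  by rewrite /wt gs; case: ifP.
move=> g' /H /andP[/negbTE a /negbTE b].
rewrite /wt a b gs; by case: (g == top u).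
Qed.

Lemma o_in g : g \in edges e -> o g \in g.
Proof. exact: hE.1. Qed.

Lemma fwd (s : nat -> T) L : 0 < L ->
  (forall i, i < L -> [set s i; s i.+1] \in edges e) ->
  o [set s 0; s 1] != s 0 ->
  (forall k, 0 < k -> k < L -> o [set s k.-1; s k] = s k -> o [set s k; s k.+1] = s k -> False) ->
  forall i, i < L -> o [set s i; s i.+1] = s i.+1.
Proof.
move=> L0 Ed h0 hk; elim=> [_|i IH iL].
  by move: (o_in (Ed 0 L0)) h0; rewrite !inE => /orP[/eqP->|/eqP->]; rewrite ?eqxx.
have IH' := IH (ltnW iL).
move: (o_in (Ed _ iL)); rewrite !inE => /orP[/eqP E|/eqP->] //.
by case: (hk i.+1 isT iL IH' E).
Qed.

Definition NB (v : T) (C : {set {set T}}) := forall g1 g2, g1 \in C -> g2 \in C -> g1 != g2 ->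
  holds g1 v -> holds g2 v -> False.

Lemma cyc_holds (c : seq T) (w : T) : is_cycle e c -> w \in c ->
  (forall v, v \in c -> v != w -> NB v (cycle_edges c)) ->
  exists2 g, g \in cycle_edges c & holds g w.
Proof.
move=> cy wc H; have [r [cy' CE' M' _]] := rot_at wc cy.
rewrite -CE'; rewrite -CE' in H.
have {}H : forall v, v \in w :: r -> v != w -> NB v (cycle_edges (w :: r)).
  by move=> v; rewrite M'; apply: H.
move: (cy') => /and3P[_ U S].
pose s i := nth w (w :: r) i.
have Ein : forall i, i < (size r).+1 -> [set s i; s i.+1] \in cycle_edges (w :: r).
  by move=> i iL; apply: CE_at.
have Eed : forall i, i < (size r).+1 -> [set s i; s i.+1] \in edges e.
  by move=> i iL; apply: (CE_edges cy'); apply: Ein.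
case: (eqVneq (o [set s 0; s 1]) w) => h0.
  by exists [set s 0; s 1]; [apply: Ein | rewrite /holds Eed // h0 eqxx].
have F := @fwd s (size r).+1 isT Eed h0.
exists [set s (size r); s (size r).+1]; first by apply: Ein.
rewrite /holds Eed // F //.
  by rewrite /s nth_default ?eqxx.
move=> k k0 kL h1 h2.
have sk : s k \in w :: r by rewrite mem_nth.
have skw : s k != w.
  apply/eqP => E; have := @nthU w _ _ _ U kL (isT : 0 < (size r).+1).
  by rewrite /s in E; rewrite E => /(_ erefl) k00; rewrite k00 in k0.
have km : k.-1 < (size r).+1 by rewrite (leq_ltn_trans (leq_pred k)).
apply: (H (s k) sk skw [set s k.-1; s k] [set s k; s k.+1]).
- by have := Ein _ km; rewrite prednK.
- by apply: Ein.
- apply/eqP => E.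
  have : s k.-1 \in [set s k; s k.+1] by rewrite -E !inE eqxx.
  rewrite !inE => /orP[]/eqP Ek.
    by have := @nthU w _ _ _ U km kL Ek; lia.
  case: (ltnP k.+1 (size r).+1) => kk.
    by have := @nthU w _ _ _ U km kk Ek; lia.
  have kr : k = size r by lia.
  move: Ek; rewrite /s [nth w _ k.+1]nth_default; last by rewrite /= kr.
  move=> Ek; have := @nthU w _ _ _ U km (isT : 0 < (size r).+1) Ek.
  by move: S; rewrite /= -kr; lia.
- by rewrite /holds h1 eqxx andbT; have := Eed _ km; rewrite prednK.
- by rewrite /holds Eed // h2 eqxx.
Qed.

Lemma pairNB_core (C : {set {set T}}) v u :
  (forall g1 g2 g3, g1 \in C -> g2 \in C -> g3 \in C -> v \in g1 -> v \in g2 -> v \in g3 ->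
     [|| g1 == g2, g1 == g3 | g2 == g3]) ->
  top v \in C -> v \in top v -> u \in top v -> u != v -> top u = top v -> NB v C.
Proof.
move=> D tC vt ut uv tu g1 g2 g1C g2C ng h1 h2.
have := D g1 g2 (top v) g1C g2C tC (holds_in h1) (holds_in h2) vt.
rewrite (negbTE ng) /= => /orP[]/eqP E.
  by apply: (topv (u:=u) h1 h2 ng) => //; rewrite E.
rewrite -E in tu ut.
by apply: (topv (u:=u) h2 h1) => //; rewrite eq_sym.
Qed.



Lemma pair_NB (w : T) (r : seq T) v : is_cycle e (w :: r) -> ~~ odd (size r) ->
  (forall z, z \in r -> top z = [set z; pm false r z]) -> v \in r ->
  NB v (cycle_edges (w :: r)).
Proof.
move=> cy ev tp vr; move: (cy) => /and3P[_ U _]; have Ur : uniq r by case/andP: U.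
set j := index v r; have js : j < size r by rewrite index_mem.
have vE : nth w r j = v by rewrite nth_index.
have cond : if odd j (+) false then 0 < j else j.+1 < size r.
  rewrite addbF; case: ifP => oj; first by case: (j) oj.
  by apply: even_next => //; rewrite oj.
have [P1 P2 P3 P4] := pmP w Ur js cond.
set j' := (if _ then _ else _) in P1 P2 P3 P4.
have jj : j != j' by case: P4 => E; rewrite E; lia.
have pmv : pm false r v = nth w r j' by rewrite -P1 vE.
apply: (@pairNB_core _ v (nth w r j')).
- by move=> g1 g2 g3; apply: cyc_deg2.
- by rewrite tp // pmv -{1}vE; apply: adjCE.
- by rewrite tp // !inE eqxx.
- by rewrite tp // pmv !inE eqxx orbT.
- by apply/eqP => E; move: jj; rewrite -vE in E; rewrite (nthU Ur P2 js E) eqxx.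
- by rewrite !tp ?mem_nth // pmv P3 vE setUC.
Qed.

Lemma secNB_core (C : {set {set T}}) v u g0 :
  (forall g1 g2 g3, g1 \in C -> g2 \in C -> g3 \in C -> v \in g1 -> v \in g2 -> v \in g3 ->
     [|| g1 == g2, g1 == g3 | g2 == g3]) ->
  g0 \in C -> v \in g0 -> g0 \in sec u -> u \in g0 ->
  (forall g', holds g' u -> (g' != top u) && (g' \notin sec u)) -> NB v C.
Proof.
move=> D gC vg gs ug H g1 g2 g1C g2C ng h1 h2.
have := D g1 g2 g0 g1C g2C gC (holds_in h1) (holds_in h2) vg.
rewrite (negbTE ng) /= => /orP[]/eqP E.
  by apply: (secv (u:=u) h1 h2 ng) => //; rewrite E.
rewrite -E in gs ug.
by apply: (secv (u:=u) h2 h1) => //; rewrite eq_sym.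
Qed.

Lemma g2_false (w : T) (r : seq T) h : is_cycle e (w :: r) -> ~~ odd (size r) ->
  holds h w -> h \notin cycle_edges (w :: r) ->
  top (nth w r 0) = [set nth w r 0; w] ->
  top (nth w r (size r).-1) = [set nth w r (size r).-1; w] ->
  (forall z, z \in r -> z != nth w r 0 -> z != nth w r (size r).-1 -> top z = [set z; pm true r z]) ->
  sec w = cycle_edges (w :: r) -> top w \notin edges e -> False.
Proof.
move=> cy ev hh hn t1 tl ti sw tw.
move: (cy) => /and3P[_ U S]; have Ur : uniq r by case/andP: U.
have wr : w \notin r by case/andP: U.
have r2 : 2 <= size r by move: S.
have r0 : 0 < size r by rewrite (leq_trans _ r2).
set v1 := nth w r 0 in t1 ti; set vl := nth w r (size r).-1 in tl ti.
have v1r : v1 \in r by rewrite mem_nth.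
have vlr : vl \in r by rewrite mem_nth // prednK.
have A : [set w; v1] \in cycle_edges (w :: r) := CE_at U (i:=0) isT.
have B : [set vl; w] \in cycle_edges (w :: r).
  have := CE_at U (i := size r) (ltnSn _).
  have -> : nth w (w :: r) (size r) = vl by rewrite /vl -[in LHS](prednK r0).
  by rewrite nth_default.
have v1w : v1 != w by apply: contraNneq wr => <-.
have vlw : vl != w by apply: contraNneq wr => <-.
have v1l : v1 != vl.
  apply/eqP => E; have lr : (size r).-1 < size r by rewrite ltn_predL.
  have E' := nthU Ur r0 lr E.
  by move: r2 E'; case: (size r) => [|[|n]].
have Ne : forall g, g \in cycle_edges (w :: r) -> ~~ holds g w.
  move=> g gC; apply/negP => hg.
  have wg := holds_in hg.
  have gh : g != h by apply: contraNneq hn => <-.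
  have AB : [set w; v1] != [set vl; w].
    apply/eqP => E; have : v1 \in [set vl; w] by rewrite -E !inE eqxx orbT.
    by rewrite !inE (negbTE v1l) (negbTE v1w).
  have := cyc_deg2 U gC A B wg; rewrite !inE !eqxx orbT => /(_ isT isT).
  rewrite (negbTE AB) orbF => /orP[]/eqP E.
    by apply: (topv (u:=v1) hg hh gh); [rewrite t1 E setUC | rewrite E !inE eqxx orbT | ].
  by apply: (topv (u:=vl) hg hh gh) => //; rewrite ?E ?tl // !inE eqxx.
have Hw : forall g', holds g' w -> (g' != top w) && (g' \notin sec w).
  move=> g' hg'; rewrite sw; apply/andP; split.
    by apply: contraNneq tw => <-; case/andP: hg'.
  by apply: contraTN hg' => /Ne.
have D : forall g1 g2 g3 v, g1 \in cycle_edges (w :: r) -> g2 \in cycle_edges (w :: r) ->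
   g3 \in cycle_edges (w :: r) -> v \in g1 -> v \in g2 -> v \in g3 -> [|| g1 == g2, g1 == g3 | g2 == g3].
  by move=> g1 g2 g3 v; apply: cyc_deg2.
have [g gC hg] : exists2 g, g \in cycle_edges (w :: r) & holds g w.
  apply: cyc_holds => //; first by rewrite inE eqxx.
  move=> v; rewrite inE => /orP[/eqP->|vr]; first by rewrite eqxx.
  move=> _.
  case: (eqVneq v v1) => [->|nv1].
    by apply: (secNB_core (u:=w) (g0:=[set w; v1])) => //;
      [move=> ? ? ?; apply: D | rewrite !inE eqxx orbT | rewrite sw | rewrite !inE eqxx].
  case: (eqVneq v vl) => [->|nvl].
    by apply: (secNB_core (u:=w) (g0:=[set vl; w])) => //;
      [move=> ? ? ?; apply: D | rewrite !inE eqxx | rewrite sw | rewrite !inE eqxx orbT].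
  set j := index v r; have js : j < size r by rewrite index_mem.
  have vE : nth w r j = v by rewrite nth_index.
  have j0 : 0 < j by rewrite lt0n; apply: contraNneq nv1 => E; rewrite -vE E.
  have jl : j < (size r).-1.
    rewrite ltn_neqAle -ltnS prednK // js andbT; apply: contraNneq nvl => E.
    by rewrite -vE E.
  have odl : odd (size r).-1 by move: ev; rewrite -[in odd (size r)](prednK r0) /= negbK.
  have cond : if odd j (+) true then 0 < j else j.+1 < size r.
    by rewrite addbT; case: ifP => _ //; rewrite -ltnS prednK // in jl; rewrite (ltn_trans jl).
  have [P1 P2 P3 P4] := pmP w Ur js cond.
  set j' := (if _ then _ else _) in P1 P2 P3 P4.
  have jj : j != j' by case: P4 => ->; [rewrite ltn_eqF | rewrite gtn_eqF].
  have pmv : pm true r v = nth w r j' by rewrite -P1 vE.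
  have ur : nth w r j' \in r by rewrite mem_nth.
  have u1 : nth w r j' != v1.
    apply/eqP => E; have := nthU Ur P2 r0 E => j'0.
    move: j'0; rewrite /j' addbT; case: ifP => oj.
      by case: (j) oj j0 => [|[|k]] //.
    by [].
  have ul : nth w r j' != vl.
    apply/eqP => E; have lr : (size r).-1 < size r by rewrite ltn_predL.
    have j'l := nthU Ur P2 lr E.
    move: j'l; rewrite /j' addbT; case: ifP => oj.
      by move=> E'; move: jl j0; rewrite -E'; case: (j) => // n; rewrite /= ltnNge leqnSn.
    by move=> E'; move: odl; rewrite -E' /= ; move: oj => /negbFE ->.
  have tv : top v = [set v; nth w r j'] by rewrite ti // pmv.
  apply: (@pairNB_core _ v (nth w r j')).
  - by move=> ? ? ?; apply: D.
  - by rewrite tv -{1}vE; apply: adjCE.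
  - by rewrite tv !inE eqxx.
  - by rewrite tv !inE eqxx orbT.
  - by apply/eqP => E; move: jj; rewrite -vE in E; rewrite (nthU Ur P2 js E) eqxx.
  - by rewrite tv ti // P3 vE setUC.
by move: (Ne g gC); rewrite hg.
Qed.

Lemma path_holds (x : T) (p : seq T) : path e x p -> 0 < size p ->
  ~~ holds [set nth x (x :: p) 0; nth x (x :: p) 1] x ->
  (forall k, 0 < k -> k < size p ->
     holds [set nth x (x :: p) k.-1; nth x (x :: p) k] (nth x (x :: p) k) ->
     holds [set nth x (x :: p) k; nth x (x :: p) k.+1] (nth x (x :: p) k) -> False) ->
  holds [set nth x (x :: p) (size p).-1; nth x (x :: p) (size p)] (nth x (x :: p) (size p)).
Proof.
move=> pa p0 h0 hk.
have Eed : forall i, i < size p -> [set nth x (x :: p) i; nth x (x :: p) i.+1] \in edges e.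
  by move=> i ip; apply: edgesP; exact: (pathP x pa i ip).
have h0' : o [set nth x (x :: p) 0; nth x (x :: p) 1] != nth x (x :: p) 0.
  by apply: contra h0 => /eqP E; rewrite /holds Eed // E eqxx.
have KH : forall k, 0 < k -> k < size p ->
    o [set nth x (x :: p) k.-1; nth x (x :: p) k] = nth x (x :: p) k ->
    o [set nth x (x :: p) k; nth x (x :: p) k.+1] = nth x (x :: p) k -> False.
  move=> k k0 kp E1 E2.
  have kk : k.-1 < size p by rewrite (leq_ltn_trans (leq_pred k)).
  apply: (hk k k0 kp).
    by rewrite /holds; have := Eed _ kk; rewrite prednK // => ->; rewrite E1 eqxx.
  by rewrite /holds Eed // E2 eqxx.
have km : (size p).-1 < size p by rewrite ltn_predL.
have F1 := @fwd (nth x (x :: p)) (size p) p0 Eed h0' KH _ km; rewrite prednK // in F1.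
rewrite /holds; have := Eed _ km; rewrite prednK // => ->.
by rewrite F1 eqxx.
Qed.
End O.

Lemma edge_not1 g w : g \in edges e -> (forall z, z \in g -> z = w) -> False.
Proof.
case/imsetP => q; rewrite inE => eq ->  H.
have a : q.1 = w by apply: H; rewrite !inE eqxx.
have b : q.2 = w by apply: H; rewrite !inE eqxx orbT.
by move: eq; rewrite a b eirr.
Qed.

Lemma set0_edges : set0 \notin edges e.
Proof.
apply/negP; case/imsetP => q _ E.
have : q.1 \in (set0 : {set T}) by rewrite E !inE eqxx.
by rewrite inE.
Qed.

Lemma CE_disj c1 c2 w g : is_cycle e c1 -> is_cycle e c2 ->
  cycle_verts c1 :&: cycle_verts c2 = [set w] ->
  g \in cycle_edges c1 -> g \in cycle_edges c2 -> False.
Proof.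
move=> cy1 cy2 I g1 g2; apply: (edge_not1 (w := w) (CE_edges cy1 g1)) => z zg.
have : z \in cycle_verts c1 :&: cycle_verts c2.
  rewrite !inE (CE_sub _ g1 zg) ?(CE_sub _ g2 zg) //.
  by case/and3P: cy2. by case/and3P: cy1.
by rewrite I inE => /eqP.
Qed.

Theorem case2 : two_odd_cycles_share_vertex e -> ~ strongly_EFX_orientable R e.
Proof.
case=> c1 [c2 [w [[cy1 cy2 od1 od2] [I _ _]]]] SO.
have : w \in cycle_verts c1 :&: cycle_verts c2 by rewrite I inE.
rewrite !inE => /andP[wc1 wc2].
have [r1 [cy1' CE1 M1 S1]] := rot_at wc1 cy1.
have [r2 [cy2' CE2 M2 S2]] := rot_at wc2 cy2.
have ev1 : ~~ odd (size r1) by move: od1; rewrite -S1 /=.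
have ev2 : ~~ odd (size r2) by move: od2; rewrite -S2 /=.
have wr1 : w \notin r1 by move: cy1' => /and3P[_ /andP[]].
have r2n1 : forall z, z \in r2 -> z \notin r1.
  move=> z zr2; apply/negP => zr1.
  have : z \in cycle_verts c1 :&: cycle_verts c2.
    by rewrite !inE -M1 -M2 !inE zr1 zr2 !orbT.
  rewrite I inE => /eqP E; move: cy2' => /and3P[_ /andP[wr2 _] _].
  by move: zr2; rewrite E (negbTE wr2).
have r2w : forall z, z \in r2 -> z != w.
  by move=> z zr; move: cy2' => /and3P[_ /andP[wr2 _] _]; apply: contraNneq wr2 => <-.
pose top v := if v \in r1 then [set v; pm false r1 v] else if v == w then set0
  else if (v == nth w r2 0) || (v == nth w r2 (size r2).-1) then [set v; w]
  else [set v; pm true r2 v].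
pose sec v := if v == w then cycle_edges (w :: r2) else set0.
have [o hE] := SO _ (fw_gi top sec).
have tp1 : forall z, z \in r1 -> top z = [set z; pm false r1 z] by move=> z zr; rewrite /top zr.
have NB1 : forall v, v \in w :: r1 -> v != w -> NB o v (cycle_edges (w :: r1)).
  move=> v; rewrite inE => /orP[/eqP->|vr]; first by rewrite eqxx.
  by move=> _; apply: (pair_NB hE cy1' ev1 tp1 vr).
have [g1 g1C hg1] := cyc_holds hE cy1' (mem_head w r1) NB1.
have r2s : 2 <= size r2 by move: cy2' => /and3P[_ _].
have v1r : nth w r2 0 \in r2 by rewrite mem_nth // (leq_trans _ r2s).
have vlr : nth w r2 (size r2).-1 \in r2 by rewrite mem_nth // ltn_predL (leq_trans _ r2s).
apply: (g2_false hE cy2' ev2 hg1).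
- apply/negP => g1C2; apply: (CE_disj cy1 cy2 I (g := g1)); by rewrite -?CE1 -?CE2.
- by rewrite /top (negbTE (r2n1 _ v1r)) (negbTE (r2w _ v1r)) eqxx.
- by rewrite /top (negbTE (r2n1 _ vlr)) (negbTE (r2w _ vlr)) eqxx orbT.
- move=> z zr n1 nl; rewrite /top (negbTE (r2n1 _ zr)) (negbTE (r2w _ zr)).
  by rewrite (negbTE n1) (negbTE nl).
- by rewrite /sec eqxx.
- by rewrite /top (negbTE wr1) eqxx set0_edges.
Qed.

Lemma half (x y : T) (r1 r2 : seq T) (a : {set T}) top sec o :
  EFX_orientation e (fw top sec) o ->
  is_cycle e (x :: r1) -> is_cycle e (y :: r2) -> ~~ odd (size r1) -> ~~ odd (size r2) ->
  a = [set x; y] -> y \in r1 ->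
  cycle_edges (x :: r1) :&: cycle_edges (y :: r2) = [set a] ->
  (forall z, z \in r1 -> top z = [set z; pm false r1 z]) ->
  (forall z, z \in r2 -> top z = [set z; pm false r2 z]) ->
  sec y = [set a] -> o a = x -> False.
Proof.
move=> hE cy1 cy2 ev1 ev2 aE yr1 I tp1 tp2 sy oa.
have xr1 : x \notin r1 by move: cy1 => /and3P[_ /andP[]].
have yr2 : y \notin r2 by move: cy2 => /and3P[_ /andP[]].
have xy : x != y by apply: contraNneq xr1 => ->.
have aC1 : a \in cycle_edges (x :: r1) by move: (set11 a); rewrite -I inE => /andP[].
have ae : a \in edges e by apply: (CE_edges cy1).
have hax : holds o a x by rewrite /holds ae oa eqxx.
have NB2 : forall v, v \in y :: r2 -> v != y -> NB o v (cycle_edges (y :: r2)).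
  move=> v; rewrite inE => /orP[/eqP->|vr]; first by rewrite eqxx.
  by move=> _; apply: (pair_NB hE cy2 ev2 tp2 vr).
have [g2 g2C hg2] := cyc_holds hE cy2 (mem_head y r2) NB2.
have [T1 T2 T3 T4] := pair_top cy1 ev1 yr1.
have ty : top y = [set y; pm false r1 y] by apply: tp1.
have xty : x \notin top y.
  by rewrite ty !inE negb_or xy /=; apply: contraNneq xr1 => ->.
have Cy : ~~ holds o (top y) y.
  apply/negP => hty.
  have ng : top y != g2.
    apply/eqP => E; have : top y \in [set a] by rewrite -I inE ty T1 -ty E g2C.
    by rewrite inE => /eqP E'; move: xty; rewrite E' aE !inE eqxx.
  apply: (topv hE (u := pm false r1 y) hty hg2 ng).
  - by rewrite tp1 // T4 ty setUC.
  - by rewrite ty !inE eqxx orbT.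
  - done.
have xonly : forall h, holds o h x -> h = a.
  move=> h hh; apply/eqP; apply/negPn/negP => nh.
  apply: (secv hE (u:=y) hax hh); first by rewrite eq_sym.
  - by rewrite sy inE.
  - by rewrite aE !inE eqxx orbT.
  move=> g' hg'; apply/andP; split.
    by apply: contraNneq Cy => <-.
  rewrite sy inE; apply: contraTN hg' => /eqP ->.
  by rewrite /holds oa (negbTE xy) andbF.
have NB1 : forall v, v \in x :: r1 -> v != y -> NB o v (cycle_edges (x :: r1)).
  move=> v; rewrite inE => /orP[/eqP->|vr] _.
    by move=> g1 g1' _ _ ng /xonly E1 /xonly E2; move: ng; rewrite E1 E2 eqxx.
  by apply: (pair_NB hE cy1 ev1 tp1 vr).
have yc1 : y \in x :: r1 by rewrite inE yr1 orbT.
have [g g1C hg] := cyc_holds hE cy1 yc1 NB1.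
have ga : g != a.
  by apply/eqP => E; move: hg; rewrite E /holds oa => /andP[_ /eqP]; apply/eqP.
move: cy1 => /and3P[_ U _].
have := cyc_deg2 U g1C aC1 T1 (holds_in hE hg); rewrite aE !inE eqxx orbT => /(_ isT).
move=> /(_ isT); rewrite -aE (negbTE ga) /= => /orP[]/eqP E.
  by move: Cy; rewrite ty -E hg.
by move: xty; rewrite ty -E aE !inE eqxx.
Qed.

Theorem case1 : two_odd_cycles_share_edge e -> ~ strongly_EFX_orientable R e.
Proof.
case=> c1 [c2 [a [[cy1 cy2 od1 od2] [EI VI _ _]]]] SO.
have aC1 : a \in cycle_edges c1 by move: (set11 a); rewrite -EI inE => /andP[].
have U1 : uniq c1 by case/and3P: cy1.
move: (aC1); rewrite CE_next // => /imsetP[x xc1 aE].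
set y := next c1 x in aE.
have exy : e x y by apply: next_cycle => //; case/and3P: cy1.
have xy : x != y by apply: contraTneq exy => ->; rewrite eirr.
have xa : x \in a by rewrite aE !inE eqxx.
have ya : y \in a by rewrite aE !inE eqxx orbT.
move: (xa) (ya); rewrite -VI !inE => /andP[xc1' xc2] /andP[yc1 yc2].
have [r1 [cy1' CE1 M1 S1]] := rot_at xc1 cy1.
have [r2 [cy2' CE2 M2 S2]] := rot_at yc2 cy2.
have ev1 : ~~ odd (size r1) by move: od1; rewrite -S1 /=.
have ev2 : ~~ odd (size r2) by move: od2; rewrite -S2 /=.
have xr1 : x \notin r1 by move: cy1' => /and3P[_ /andP[]].
have yr2 : y \notin r2 by move: cy2' => /and3P[_ /andP[]].
have yr1 : y \in r1 by move: yc1; rewrite -M1 inE eq_sym (negbTE xy).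
have xr2 : x \in r2 by move: xc2; rewrite -M2 inE (negbTE xy).
have r12 : forall z, z \in r2 -> z \notin r1.
  move=> z zr2; apply/negP => zr1.
  have : z \in a by rewrite -VI !inE -M1 -M2 !inE zr1 zr2 !orbT.
  rewrite aE !inE => /orP[]/eqP E.
    by move: zr1; rewrite E (negbTE xr1).
  by move: zr2; rewrite E (negbTE yr2).
pose top v := if v \in r1 then [set v; pm false r1 v] else [set v; pm false r2 v].
pose sec v := if (v == x) || (v == y) then [set a] else set0.
have [o hE] := SO _ (fw_gi top sec).
have tp1 : forall z, z \in r1 -> top z = [set z; pm false r1 z] by move=> z zr; rewrite /top zr.
have tp2 : forall z, z \in r2 -> top z = [set z; pm false r2 z].
  by move=> z zr; rewrite /top (negbTE (r12 _ zr)).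
have I : cycle_edges (x :: r1) :&: cycle_edges (y :: r2) = [set a] by rewrite CE1 CE2.
have ae : a \in edges e by apply: (CE_edges cy1).
have oin : o a \in a := hE.1 a ae.
move: oin; rewrite {2}aE !inE => /orP[]/eqP oa.
  by apply: (half hE cy1' cy2' ev1 ev2 aE yr1 I tp1 tp2) => //; rewrite /sec eqxx orbT.
apply: (half hE (a := a) cy2' cy1' ev2 ev1 _ xr2 _ tp2 tp1 _ oa).
- by rewrite aE setUC.
- by rewrite setIC.
- by rewrite /sec eqxx.
Qed.

Lemma nth_belast (x0 x : T) (p : seq T) k : k < size p -> nth x0 (belast x p) k = nth x0 (x :: p) k.
Proof.
elim: p x k => [|z p IH] x [|k] //= kp.
by rewrite IH.
Qed.

Lemma internal_mem (x : T) (p : seq T) k : 0 < k -> k < size p ->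
  nth x (x :: p) k \in behead (belast x p).
Proof.
move=> k0 kp.
have E : nth x (behead (belast x p)) k.-1 = nth x (x :: p) k.
  by rewrite nth_behead prednK // nth_belast.
rewrite -E mem_nth // size_behead size_belast.
clear E; case: k k0 kp => // k _ kp; rewrite /= -ltnS prednK //; exact: ltn_trans (ltn0Sn k) kp.
Qed.

Lemma neqS n : n = n.+1 -> False. Proof. by elim: n => // n IH [] /IH. Qed.
Lemma neqS' n : n.+1 = n -> False. Proof. by elim: n => // n IH [] /IH. Qed.
Lemma neqS2 n : n = n.+2 -> False. Proof. by elim: n => // n IH [] /IH. Qed.

Theorem case3 : two_odd_cycles_joined_by_path e -> ~ strongly_EFX_orientable R e.
Proof.
case=> c1 [c2 [x [p [[cy1 cy2 od1 od2] [VI [[pa Up p1] [xc1 yc2 Aint]] _ _]]]]] SO.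
set L := size p in p1.
set y := last x p in yc2.
have yE : nth x (x :: p) L = y by rewrite /y (last_nth x).
have disj : forall z, z \in c1 -> z \in c2 -> False.
  move=> z z1 z2; have : z \in cycle_verts c1 :&: cycle_verts c2 by rewrite !inE z1 z2.
  by rewrite VI inE.
have int : forall k, 0 < k -> k < L -> (nth x (x :: p) k \notin c1) && (nth x (x :: p) k \notin c2).
  by move=> k k0 kL; move/allP: Aint; apply; apply: internal_mem.
have [r1 [cy1' CE1 M1 S1]] := rot_at xc1 cy1.
have [r2 [cy2' CE2 M2 S2]] := rot_at yc2 cy2.
have ev1 : ~~ odd (size r1) by move: od1; rewrite -S1 /=.
have ev2 : ~~ odd (size r2) by move: od2; rewrite -S2 /=.
have xr1 : x \notin r1 by move: cy1' => /and3P[_ /andP[]].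
have yr2 : y \notin r2 by move: cy2' => /and3P[_ /andP[]].
have r1c1 : forall z, z \in r1 -> z \in c1 by move=> z zr; rewrite -M1 inE zr orbT.
have r2c2 : forall z, z \in r2 -> z \in c2 by move=> z zr; rewrite -M2 inE zr orbT.
have yc1 : y \notin c1 by apply/negP => /disj; apply.
have xc2 : x \notin c2 by apply/negP; apply: disj.
have F4 : forall k, 0 < k -> k <= L -> nth x (x :: p) k \notin c1.
  move=> k k0; rewrite leq_eqVlt => /orP[/eqP->|kL]; first by rewrite yE.
  by case/andP: (int k k0 kL).
have F3 : forall k, k < L -> nth x (x :: p) k \notin c2.
  by case=> [//|k] kL; case/andP: (int k.+1 isT kL).
have F1 : forall k, k <= L -> nth x (x :: p) k \notin r1.
  case=> [//|k] kL; apply/negP => /r1c1; apply/negP; exact: F4.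
have F2 : forall k, k <= L -> nth x (x :: p) k \notin r2.
  move=> k; rewrite leq_eqVlt => /orP[/eqP->|kL]; first by rewrite yE.
  by apply/negP => /r2c2; apply/negP; apply: F3.
have sr1 : forall z, z \in x :: p -> z \notin r1.
  by move=> z zs; rewrite -(nth_index x zs); apply: F1; rewrite -ltnS index_mem.
have sr2 : forall z, z \in x :: p -> z \notin r2.
  by move=> z zs; rewrite -(nth_index x zs); apply: F2; rewrite -ltnS index_mem.
have r21 : forall z, z \in r2 -> z \notin r1.
  by move=> z zr; apply/negP => /r1c1 /disj; apply; apply: r2c2.
have r2y : forall z, z \in r2 -> z != y by move=> z zr; apply: contraNneq yr2 => <-.
have r2s : forall z, z \in r2 -> z \notin x :: p.
  by move=> z zr; apply: contraTN zr => /sr2.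
pose top v := if v \in r1 then [set v; pm false r1 v]
  else if (v \in x :: p) && ((v != y) || odd L) then [set v; pm false (x :: p) v]
  else if v == y then set0
  else if odd L then [set v; pm false r2 v]
  else if (v == nth y r2 0) || (v == nth y r2 (size r2).-1) then [set v; y]
  else [set v; pm true r2 v].
pose sec v := if (v == y) && ~~ odd L then cycle_edges (y :: r2) else set0.
have [o hE] := SO _ (fw_gi top sec).
have tp1 : forall z, z \in r1 -> top z = [set z; pm false r1 z] by move=> z zr; rewrite /top zr.
have NB1 : forall v, v \in x :: r1 -> v != x -> NB o v (cycle_edges (x :: r1)).
  move=> v; rewrite inE => /orP[/eqP->|vr]; first by rewrite eqxx.
  by move=> _; apply: (pair_NB hE cy1' ev1 tp1 vr).
have [g1 g1C hg1] := cyc_holds hE cy1' (mem_head x r1) NB1.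
have ptop : forall k, k <= L -> (k < L) || odd L ->
    top (nth x (x :: p) k) = [set nth x (x :: p) k; pm false (x :: p) (nth x (x :: p) k)].
  move=> k kL kc; rewrite /top (negbTE (F1 _ kL)) mem_nth //.
  suff -> : (nth x (x :: p) k != y) || odd L by [].
  case/orP: kc => [kl|->]; last by rewrite orbT.
  apply/orP; left; apply/eqP => E; move: kl; rewrite -yE in E.
  by rewrite (nthU Up _ _ E) ?ltnn.
have pmk : forall k, k <= L -> (if odd k then 0 < k else k < L) ->
   let j' := if odd k then k.-1 else k.+1 in
   [/\ pm false (x :: p) (nth x (x :: p) k) = nth x (x :: p) j', j' <= L,
       pm false (x :: p) (nth x (x :: p) j') = nth x (x :: p) k & (j' = k.+1 \/ k = j'.+1)].
  move=> k kL kc.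
  have := @pmP false (x :: p) x k Up kL; rewrite addbF => /(_ kc) [P1 P2 P3 P4].
  by split.
have Eed : forall i, i < L -> [set nth x (x :: p) i; nth x (x :: p) i.+1] \in edges e.
  by move=> i iL; apply: edgesP; exact: (pathP x pa i iL).
have nx : ~~ holds o [set nth x (x :: p) 0; nth x (x :: p) 1] x.
  apply/negP => h0.
  have [P1 _ P3 _] := pmk 0 (leq0n _) p1.
  have n1 : nth x (x :: p) 1 \notin c1 by apply: F4.
  have ng : [set nth x (x :: p) 0; nth x (x :: p) 1] != g1.
    apply/eqP => E; have : nth x (x :: p) 1 \in g1 by rewrite -E !inE eqxx orbT.
    have U1 : uniq (x :: r1) by case/and3P: cy1'.
    by move/(CE_sub U1 g1C); rewrite M1 (negbTE n1).
  apply: (topv hE (u := nth x (x :: p) 1) h0 hg1 ng).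
  - rewrite ptop //; last by move: p1; rewrite leq_eqVlt => /orP[/eqP<-|->].
    by rewrite P3 setUC.
  - by rewrite !inE eqxx orbT.
  - by apply/eqP => E; have := nthU Up (p1 : 1 < (size p).+1) (isT : 0 < (size p).+1) E.
have hy : holds o [set nth x (x :: p) L.-1; nth x (x :: p) L] (nth x (x :: p) L).
  apply: (path_holds hE pa p1 nx) => k k0 kL h1 h2.
  have kc : if odd k then 0 < k else k < L by case: ifP.
  have [P1 P2 P3 P4] := pmk k (ltnW kL) kc.
  set j' := (if _ then _ else _) in P1 P2 P3 P4.
  have tk : top (nth x (x :: p) k) = [set nth x (x :: p) k; nth x (x :: p) j'].
    by rewrite ptop ?kL ?(ltnW kL) // P1.
  have tj : top (nth x (x :: p) j') = [set nth x (x :: p) j'; nth x (x :: p) k].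
    have ptj : (j' < L) || odd L.
      rewrite /j'; case: ifP => ok.
        by rewrite (leq_ltn_trans (leq_pred k)).
      rewrite ltn_neqAle kL; case: eqVneq => //= E.
      by rewrite -E /= ok.
    by rewrite ptop // P3.
  have km : k.-1 < L.+1 by rewrite (leq_ltn_trans (leq_pred k)) // ltnW.
  have nE : [set nth x (x :: p) k.-1; nth x (x :: p) k] != [set nth x (x :: p) k; nth x (x :: p) k.+1].
    apply/eqP => E; have : nth x (x :: p) k.-1 \in [set nth x (x :: p) k; nth x (x :: p) k.+1].
      by rewrite -E !inE eqxx.
    rewrite !inE => /orP[]/eqP E'.
      by have := nthU Up km (ltnW kL : k < L.+1) E'; case: (k) k0 => // n _ /= /neqS.
    by have := nthU Up km (kL : k.+1 < L.+1) E'; case: (k) k0 => // n _ /= /neqS2.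
  have ujk : nth x (x :: p) j' != nth x (x :: p) k.
    apply/eqP => E; have := nthU Up P2 (ltnW kL : k < L.+1) E.
    by case: P4 => ->; [move/neqS' | move/neqS].
  case: P4 => Ej.
    apply: (topv hE (u := nth x (x :: p) j') h2 h1); first by rewrite eq_sym.
    - by rewrite tj setUC Ej.
    - by rewrite Ej !inE eqxx orbT.
    - exact: ujk.
  apply: (topv hE (u := nth x (x :: p) j') h1 h2 nE).
  - by rewrite tj Ej /= setUC.
  - by rewrite Ej /= !inE eqxx.
  - exact: ujk.
rewrite yE in hy.
have nL1 : nth x (x :: p) L.-1 \notin c2 by apply: F3; rewrite ltn_predL.
have hnC2 : [set nth x (x :: p) L.-1; y] \notin cycle_edges (y :: r2).
  have U2 : uniq (y :: r2) by case/and3P: cy2'.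
  apply/negP => hC.
  have hz : nth x (x :: p) L.-1 \in [set nth x (x :: p) L.-1; y] by rewrite !inE eqxx.
  by have := CE_sub U2 hC hz; rewrite M2 (negbTE nL1).
case: (boolP (odd L)) => oL.
  have tp2 : forall z, z \in r2 -> top z = [set z; pm false r2 z].
    move=> z zr; rewrite /top (negbTE (r21 _ zr)) (negbTE (r2s _ zr)) (negbTE (r2y _ zr)).
    by rewrite oL.
  have NB2 : forall v, v \in y :: r2 -> v != y -> NB o v (cycle_edges (y :: r2)).
    move=> v; rewrite inE => /orP[/eqP->|vr]; first by rewrite eqxx.
    by move=> _; apply: (pair_NB hE cy2' ev2 tp2 vr).
  have [g2 g2C hg2] := cyc_holds hE cy2' (mem_head y r2) NB2.
  have L0 : 0 < L by [].
  have kc : if odd L.-1 then 0 < L.-1 else L.-1 < L.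
    by move: oL; rewrite -{1}(prednK L0) /= => /negbTE ->; rewrite ltn_predL.
  have [P1 P2 P3 _] := pmk L.-1 (leq_pred L) kc.
  move: P1 P3; have -> : odd L.-1 = false by move: oL; rewrite -{1}(prednK L0) /= => /negbTE.
  rewrite prednK // yE => P1 P3.
  apply: (topv hE (u := nth x (x :: p) L.-1) hy hg2).
  - by apply: contraNneq hnC2 => ->.
  - have kk : (L.-1 < L) || odd L by rewrite ltn_predL L0.
    by rewrite (ptop _ (leq_pred L) kk) P1.
  - by rewrite !inE eqxx.
  - apply/eqP => E; rewrite -yE in E.
    by have := nthU Up (leq_ltn_trans (leq_pred L) (ltnSn L)) (ltnSn L) E; rewrite -{2}(prednK L0) => /n_Sn.
have r2s2 : 2 <= size r2 by move: cy2' => /and3P[_ _].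
apply: (g2_false hE cy2' ev2 hy hnC2).
- have zr : nth y r2 0 \in r2 by rewrite mem_nth // (leq_trans _ r2s2).
  by rewrite /top (negbTE (r21 _ zr)) (negbTE (r2s _ zr)) (negbTE (r2y _ zr)) (negbTE oL) eqxx.
- have zr : nth y r2 (size r2).-1 \in r2.
    by rewrite mem_nth // ltn_predL (leq_trans _ r2s2).
  by rewrite /top (negbTE (r21 _ zr)) (negbTE (r2s _ zr)) (negbTE (r2y _ zr)) (negbTE oL) eqxx orbT.
- move=> z zr n1 nl.
  rewrite /top (negbTE (r21 _ zr)) (negbTE (r2s _ zr)) (negbTE (r2y _ zr)) (negbTE oL).
  by rewrite (negbTE n1) (negbTE nl).
- by rewrite /sec eqxx oL.
- have yp : y \in x :: p by rewrite -yE mem_nth.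
  by rewrite /top -[y \in r1]/(y \in r1) (negbTE (sr1 _ yp)) yp eqxx (negbTE oL) /= set0_edges.
Qed.
End Gen.

End Aux.

Theorem mainTheorem13 (R : realType) (T : finType) (e : rel T) :
  symmetric e -> irreflexive e ->
  two_odd_cycles_share_edge e \/ two_odd_cycles_share_vertex e \/
  two_odd_cycles_joined_by_path e ->
  ~ strongly_EFX_orientable R e.
Proof.
move=> hs hi [H|[H|H]].
- exact: (@Aux.case1 T e hi R H).
- exact: (@Aux.case2 T e hi R H).
- by apply: (Aux.case3 (R:=R) (e:=e)) => //.
Qed.
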